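(* Let $(X,r)$ be a finite simple solution of the YBE such that $|X|$ is not a prime number. Then $(X,r)$ is irretractable.
   Context: A solution of the Yang–Baxter equation (YBE) is a pair $(X,r)$ where $X$ is a nonempty set and $r:X\times X\to X\times X$ is a map, written $r(x,y)=(\sigma_x(y),\gamma_y(x))$, such that $r^2=\mathrm{id}$, all maps $\sigma_x,\gamma_x:X\to X$ are bijective, and $r_{12}r_{23}r_{12}=r_{23}r_{12}r_{23}$ on $X^3$, where $r_{12}=r\times\mathrm{id}_X$, $r_{23}=\mathrm{id}_X\times r$. $(X,r)$ is irretractable if $\sigma_x\neq\sigma_y$ for all distinct $x,y\in X$. If $(Y,s)$ is another solution with $s(t,z)=(\sigma'_t(z),\gamma'_z(t))$, a homomorphism of solutions $f:(X,r)\to(Y,s)$ is a map $f:X\to Y$ with $f(\sigma_x(y))=\sigma'_{f(x)}(f(y))$ for all $x,y$; epimorphism = surjective homomorphism, isomorphism = bijective homomorphism. $(X,r)$ is simple if $|X|>1$ and every epimorphism of solutions $f:(X,r)\to(Y,s)$ is either an isomorphism or satisfies $|Y|=1$. *)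

(* Defs.v *)
From mathcomp Require Import all_boot.
Set Implicit Arguments. Unset Strict Implicit. Unset Printing Implicit Defensive.

(* A map r : X * X -> X * X, written r(x,y) = (sigma_x(y), gamma_y(x)). *)
Definition sigma_ {X : Type} (r : X * X -> X * X) (x y : X) : X := (r (x, y)).1.
Definition gamma_ {X : Type} (r : X * X -> X * X) (y x : X) : X := (r (x, y)).2.

Definition r12 {X : Type} (r : X * X -> X * X) (t : X * X * X) : X * X * X :=
  let: (a, b, c) := t in let: (a', b') := r (a, b) in (a', b', c).
Definition r23 {X : Type} (r : X * X -> X * X) (t : X * X * X) : X * X * X :=
  let: (a, b, c) := t in let: (b', c') := r (b, c) in (a, b', c').

Definition is_solution {X : Type} (r : X * X -> X * X) : Prop :=
  [/\ (forall p, r (r p) = p),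
      (forall x, bijective (sigma_ r x)),
      (forall x, bijective (gamma_ r x)) &
      (forall t, r12 r (r23 r (r12 r t)) = r23 r (r12 r (r23 r t)))].

Definition irretractable {X : Type} (r : X * X -> X * X) : Prop :=
  forall x y : X, x <> y -> sigma_ r x <> sigma_ r y.

Definition sol_hom {X Y : Type} (r : X * X -> X * X) (s : Y * Y -> Y * Y)
  (f : X -> Y) : Prop :=
  forall x y, f (sigma_ r x y) = sigma_ s (f x) (f y).

Definition simple_solution {X : Type} (r : X * X -> X * X) : Prop :=
  (exists x y : X, x <> y) /\
  forall (Y : Type) (s : Y * Y -> Y * Y) (f : X -> Y),
    is_solution s -> sol_hom r s f -> (forall y, exists x, f x = y) ->
    bijective f \/ (exists y0 : Y, forall y, y = y0).

(* Main.v *)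
Require Import Defs.
From mathcomp Require Import all_boot.
Set Implicit Arguments. Unset Strict Implicit. Unset Printing Implicit Defensive.

Lemma surj_bij (Y : finType) (g : Y -> Y) : (forall y, exists x, g x = y) -> bijective g.
Proof.
move=> sg.
have cd : forall y, y \in codom g.
  move=> y; case: (sg y) => x <-; exact: codom_f.
pose h y := iinv (cd y).
have gh : cancel h g by move=> y; rewrite /h f_iinv.
have [k hk kh] := injF_bij (can_inj gh).
have gk : forall y, g y = k y by move=> y; rewrite -{1}(kh y) gh.
by exists h => y; rewrite ?gk ?hk ?kh // -gk gh.
Qed.

Section Sol.
Variable X : finType.
Variable r : X * X -> X * X.
Hypothesis sol : is_solution r.

Lemma rE a b : r (a, b) = (sigma_ r a b, gamma_ r b a).
Proof. by rewrite /sigma_ /gamma_; case: (r (a,b)). Qed.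

Lemma inv1 a b : sigma_ r (sigma_ r a b) (gamma_ r b a) = a.
Proof.
case: sol => inv _ _ _.
by have := inv (a, b); rewrite rE rE; case.
Qed.

Lemma ybe1 a b c : sigma_ r a (sigma_ r b c) =
  sigma_ r (sigma_ r a b) (sigma_ r (gamma_ r b a) c).
Proof.
case: sol => _ _ _ Y.
have := Y (a, b, c); rewrite /r12 /r23 !rE /=.
by case=> ->.
Qed.

Lemma sinj c : injective (sigma_ r c).
Proof. by case: sol => _ B _ _; apply: bij_inj. Qed.

Definition sim p q := finfun (sigma_ r p) == finfun (sigma_ r q).

Lemma simP p q : reflect (forall z, sigma_ r p z = sigma_ r q z) (sim p q).
Proof.
apply: (iffP eqP) => [E z|E]; last by apply/ffunP=> z; rewrite !ffunE.
by have := congr1 (fun g : {ffun X -> X} => g z) E; rewrite !ffunE.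
Qed.

Lemma simE c p q : sim (sigma_ r c p) (sigma_ r c q) -> sim p q.
Proof.
move/simP=> E; apply/simP=> z.
have e1 := inv1 c p; have e2 := inv1 c q.
have eg : gamma_ r p c = gamma_ r q c.
  apply: (@sinj (sigma_ r c p)); by rewrite e1 E e2.
apply: (@sinj c); by rewrite (ybe1 c p z) (ybe1 c q z) E eg.
Qed.

Lemma simH c p q : sim p q -> sim (sigma_ r c p) (sigma_ r c q).
Proof.
pose R := [set pq : X * X | sim pq.1 pq.2].
pose Phi := fun pq : X * X => (sigma_ r c pq.1, sigma_ r c pq.2).
have Pinj : injective Phi.
  by move=> [a b] [a' b'] [/sinj -> /sinj ->].
have sub : Phi @^-1: R \subset R.
  by apply/subsetP=> [[a b]]; rewrite !inE /=; apply: simE.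
have eq : Phi @^-1: R = R.
  by apply/eqP; rewrite eqEcard sub /= (card_preimset _ Pinj) leqnn.
move=> spq.
have : (p, q) \in Phi @^-1: R by rewrite eq inE.
by rewrite inE inE.
Qed.

Lemma sim_refl p : sim p p.
Proof. exact: eqxx. Qed.
Lemma sim_sym p q : sim p q -> sim q p.
Proof. by rewrite /sim eq_sym. Qed.
Lemma sim_trans p q u : sim p q -> sim q u -> sim p u.
Proof. by rewrite /sim => /eqP ->. Qed.

Lemma simS a a' b b' : sim a a' -> sim b b' ->
  sim (sigma_ r a b) (sigma_ r a' b').
Proof.
move=> /simP Ea Sb; rewrite -Ea; exact: simH.
Qed.

Lemma simG a a' b b' : sim a a' -> sim b b' ->
  sim (gamma_ r b a) (gamma_ r b' a').
Proof.
move=> Sa Sb; have Su := simS Sa Sb.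
apply: (@simE (sigma_ r a b)).
rewrite inv1; move/simP: Su => ->; rewrite inv1.
exact: Sa.
Qed.
End Sol.

Lemma descend (X Y : finType) (r : X * X -> X * X) (s : Y * Y -> Y * Y)
  (f : X -> Y) : is_solution r -> (forall y, exists x, f x = y) ->
  (forall a b, s (f a, f b) = (f (r (a,b)).1, f (r (a,b)).2)) -> is_solution s.
Proof.
move=> sol fs hs.
have hs' : forall p, s (f p.1, f p.2) = (f (r p).1, f (r p).2) by case.
case: (sol) => inv Bs Bg Yb.
split.
- case=> A B; case: (fs A) => a <-; case: (fs B) => b <-.
  by rewrite hs hs' inv.
- move=> A; case: (fs A) => a <-; apply: surj_bij => B.
  case: (fs B) => c <-; case: (Bs a) => g _ gK.
  by exists (f (g c)); rewrite /sigma_ hs rE //= gK.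
- move=> B; case: (fs B) => b <-; apply: surj_bij => A.
  case: (fs A) => c <-; case: (Bg b) => g _ gK.
  exists (f (g c)); rewrite /gamma_ hs rE //=.
  by have := gK c; rewrite /gamma_ => ->.
- pose f3 (t : X * X * X) := (f t.1.1, f t.1.2, f t.2).
  have h12 : forall t, r12 s (f3 t) = f3 (r12 r t).
    by case=> [[a b] c]; rewrite /r12 /f3 /= hs; case: (r (a, b)).
  have h23 : forall t, r23 s (f3 t) = f3 (r23 r t).
    by case=> [[a b] c]; rewrite /r23 /f3 /= hs; case: (r (b, c)).
  case=> [[A B] C]; case: (fs A) => a <-; case: (fs B) => b <-; case: (fs C) => c <-.
  have -> : (f a, f b, f c) = f3 (a, b, c) by [].
  by rewrite !(h12, h23) Yb.
Qed.

Lemma perm_sol (Y : Type) (t t' : Y -> Y) : cancel t t' -> cancel t' t ->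
  is_solution (fun p => (t p.2, t' p.1)).
Proof.
move=> K1 K2; split.
- by case=> a b /=; rewrite K1 K2.
- by move=> a; exists t'.
- by move=> a; exists t.
- by case=> [[a b] c]; rewrite /r12 /r23 /= K1 K2.
Qed.

Lemma perm_case (X : finType) (r : X * X -> X * X) (t : X -> X) :
  is_solution r -> (forall a z, sigma_ r a z = t z) -> simple_solution r ->
  ~~ prime #|X| -> False.
Proof.
move=> sol ht [[x0 [x1' ne]] simp] np.
have tinj : injective t.
  by move=> u v; rewrite -!(ht x0); apply: sinj.
have n1 : 1 < #|X|.
  by apply/card_gt1P; exists x0, x1'; split => //; apply/eqP.
case: (boolP [exists x1, ~~ fconnect t x0 x1]).
  case/existsP=> x1 nx1.
  pose f x := fconnect t x0 x.
  have := simp bool (fun p => (id p.2, id p.1)) f (@perm_sol bool id id (fun _ => erefl) (fun _ => erefl)).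
  case.
  - move=> a y; rewrite ht /sigma_ /= /f.
    apply/idP/idP => H.
      apply: connect_trans H _; rewrite fconnect_sym //; exact: fconnect1.
    apply: connect_trans H _; exact: fconnect1.
  - case=> [|]; first by exists x0; rewrite /f connect0.
    by exists x1; apply/negbTE.
  - move=> /bij_inj finj.
    have := leq_card f finj; rewrite card_bool => le2.
    have e2 : #|X| = 2 by apply/eqP; rewrite eqn_leq le2 n1.
    by rewrite e2 in np.
  - by case=> y0 H; have h1 := H true; have h2 := H false; rewrite -h2 in h1.
move=> nall.
have allc : forall x, fconnect t x0 x.
  move=> x; apply: contraNT nall => nx; apply/existsP; exists x; exact: nx.
have ord : order t x0 = #|X|.
  rewrite /order; apply: eq_card => x; rewrite [RHS]inE; exact: (allc x).
set n := #|X| in n1 np ord.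
have pp : prime (pdiv n) := pdiv_prime n1.
set p := pdiv n in pp.
have p0 : 0 < p := prime_gt0 pp.
have pn : p < n.
  rewrite ltn_neqAle dvdn_leq ?(ltnW n1) ?(pdiv_dvd n) ?andbT //.
  by apply: contraNneq np => <-.
have fi : forall k, k < n -> findex t x0 (iter k t x0) = k.
  by move=> k kn; apply: findex_iter; rewrite ord.
pose f x : 'I_p := Ordinal (ltn_pmod (findex t x0 x) p0).
have := simp _ _ f (@perm_sol 'I_p (@ordS p) (@ord_pred p) (@ordSK p) (@ord_predK p)).
case.
- move=> a y; rewrite ht /sigma_ /=; apply: val_inj => /=.
  rewrite -addn1 modnDml addn1.
  have ky := findex_max (allc y); rewrite ord in ky.
  have yi := iter_findex (allc y).
  move: ky yi; set k := findex t x0 y => ky yi.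
  rewrite -yi -iterS.
  case: (ltngtP k.+1 n) => [lt|gt|eq].
  - by rewrite fi.
  - by rewrite ltnNge ky in gt.
  - rewrite eq -{1}ord iter_order // (eqP (pdiv_dvd n)).
    by have := fi 0 (ltnW n1) => /= ->; rewrite mod0n.
- move=> y; exists (iter y t x0); apply: val_inj => /=.
  by rewrite fi ?modn_small //; exact: ltn_trans (ltn_ord y) pn.
- move=> /bij_inj finj.
  have : f x0 = f (iter p t x0).
    apply: val_inj => /=; rewrite fi // modnn.
    by have := fi 0 (ltnW n1) => /= ->; rewrite mod0n.
  move/finj => e.
  have := fi p pn; rewrite -e.
  have := fi 0 (ltnW n1) => /= -> h0.
  by move: pp; rewrite -h0.
- case=> y0 H.
  have p1 := prime_gt1 pp.
  by have := H (Ordinal p0); have := H (Ordinal p1) => <- /(congr1 val).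
Qed.

Theorem mainTheorem2 (X : finType) (r : X * X -> X * X) :
  is_solution r -> simple_solution r -> ~~ prime #|X| -> irretractable r.
Proof.
move=> sol simpl np a b nab eqs.
have simp := simpl; case: simpl => [_ simpl].
pose F (x : X) : {ffun X -> X} := finfun (sigma_ r x).
pose Y := {g : {ffun X -> X} | g \in codom F}.
pose f (x : X) : Y := exist _ (F x) (codom_f F x).
pose rep (A : Y) : X := iinv (valP A).
have rep_sim : forall x, sim r (rep (f x)) x.
  move=> x; apply/eqP; exact: (f_iinv (valP (f x))).
have fsim : forall u v, sim r u v -> f u = f v.
  by move=> u v /eqP e; apply: val_inj.
pose s (p : Y * Y) := (f (sigma_ r (rep p.1) (rep p.2)), f (gamma_ r (rep p.2) (rep p.1))).
have hs : forall u v, s (f u, f v) = (f (r (u, v)).1, f (r (u, v)).2).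
  move=> u v; rewrite rE /s /=; congr pair; apply: fsim.
    exact: simS.
  exact: simG.
have fs : forall y, exists x, f x = y.
  move=> [g gc]; exists (iinv gc); apply: val_inj => /=; exact: f_iinv.
have ssol := descend sol fs hs.
have hom : sol_hom r s f by move=> u v; rewrite /sigma_ hs rE.
case: (simpl Y s f ssol hom fs).
  move/bij_inj => finj; apply: nab; apply: finj; apply: fsim.
  by apply/simP => z; rewrite eqs.
case=> y0 H.
apply: (@perm_case X r (sigma_ r a) sol _ simp np).
move=> c z; have e : f c = f a by rewrite (H (f c)) (H (f a)).
have : F c = F a by move: (congr1 val e).
by move/(congr1 (fun g : {ffun X -> X} => g z)); rewrite !ffunE.
Qed.
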